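(* Let $E\subseteq\mathbb{R}$, let $f:E\to\mathbb{R}$ be Abel continuous on $E$, and let $F\subseteq E$ be Abel sequentially compact. Then $f(F)$ is Abel sequentially compact.
   Context: A sequence $(p_n)_{n\ge0}$ is Abel convergent to $\ell$ if $\sum_{k=0}^{\infty}p_k x^k$ converges for every $0\le x<1$ and $\lim_{x\to 1^-}(1-x)\sum_{k=0}^{\infty}p_k x^k=\ell$. $f$ is Abel continuous on $E$ if for every sequence $(p_n)$ in $E$ Abel convergent to some $\ell\in E$, $(f(p_n))$ is Abel convergent to $f(\ell)$. A subset $F\subseteq\mathbb{R}$ is Abel sequentially compact if every sequence of points of $F$ has a subsequence $(r_k)$ that is Abel convergent to a limit belonging to $F$. *)

(* Defs.v *)
From Stdlib Require Import Reals.
Open Scope R_scope.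

Definition abel_convergent (p : nat -> R) (l : R) : Prop :=
  exists A : R -> R,
    (forall x, 0 <= x < 1 -> infinite_sum (fun k => p k * x ^ k) (A x)) /\
    (forall eps, eps > 0 -> exists delta, delta > 0 /\
       forall x, 0 <= x < 1 -> 1 - x < delta -> Rabs ((1 - x) * A x - l) < eps).

Definition abel_continuous (E : R -> Prop) (f : R -> R) : Prop :=
  forall (p : nat -> R) (l : R),
    (forall n, E (p n)) -> E l -> abel_convergent p l ->
    abel_convergent (fun n => f (p n)) (f l).

Definition abel_seq_compact (F : R -> Prop) : Prop :=
  forall p : nat -> R, (forall n, F (p n)) ->
    exists (phi : nat -> nat) (l : R),
      (forall n, (phi n < phi (S n))%nat) /\ F l /\
      abel_convergent (fun k => p (phi k)) l.

Definition image (f : R -> R) (F : R -> Prop) : R -> Prop :=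
  fun y => exists x, F x /\ y = f x.

(* Main.v *)
Require Import Defs.
From Stdlib Require Import Reals ClassicalChoice FunctionalExtensionality.
Open Scope R_scope.

Theorem theorem11 (E F : R -> Prop) (f : R -> R) :
  abel_continuous E f ->
  (forall x, F x -> E x) ->
  abel_seq_compact F ->
  abel_seq_compact (image f F).
Proof.
  intros Hc HFE Hk q Hq.
  destruct (choice (fun (n : nat) (x : R) => F x /\ q n = f x) Hq) as [x Hx].
  destruct (Hk x (fun n => proj1 (Hx n))) as [phi [l [Hphi [Hl Ha]]]].
  exists phi, (f l). split; [exact Hphi|]. split.
  - exists l; split; auto.
  - assert (H := Hc (fun k => x (phi k)) l (fun n => HFE _ (proj1 (Hx (phi n)))) (HFE _ Hl) Ha).
    assert (Heq : (fun k => q (phi k)) = (fun n => f (x (phi n)))).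
    { apply functional_extensionality_dep; intro k; apply (proj2 (Hx (phi k))). }
    rewrite Heq; exact H.
Qed.
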